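(* Let $L$ be a finite-dimensional solvable Lie algebra over an arbitrary field $F$ and let $U$ be a non-zero core-free semi-modular subalgebra of $L$. Then $\dim U=1$ and $L$ is almost abelian.
   Context: For subalgebras $U,B$ of a Lie algebra $L$, $\langle U,B\rangle$ denotes the subalgebra generated by $U\cup B$. A subalgebra $B$ covers a subalgebra $A$ if $A$ is a maximal subalgebra of $B$. $U$ is upper modular (um) in $L$ if whenever $B$ is a subalgebra of $L$ which covers $U\cap B$, then $\langle U,B\rangle$ covers $U$; $U$ is lower modular (lm) in $L$ if whenever $B$ is a subalgebra of $L$ such that $\langle U,B\rangle$ covers $U$, then $B$ covers $U\cap B$; $U$ is semi-modular (sm) in $L$ if it is both um and lm in $L$. The core $U_L$ of $U$ is the largest ideal of $L$ contained in $U$; $U$ is core-free if $U_L=0$. $L$ is almost abelian if $L=L^2\oplus Fx$ for some $x$, where $L^2=[L,L]$ is abelian and $\mathrm{ad}\,x$ acts as the identity map on $L^2$. *)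

(* Defs.v *)
From HB Require Import structures.
From mathcomp Require Import all_boot all_order all_algebra.
Set Implicit Arguments. Unset Strict Implicit. Unset Printing Implicit Defensive.
Import GRing.Theory.
Local Open Scope ring_scope.

Section Lie.
Variables (F : fieldType) (V : vectType F) (br : V -> V -> V).

Definition is_lie_bracket : Prop :=
  [/\ forall (a : F) (x y z : V), br (a *: x + y) z = a *: br x z + br y z,
      forall (a : F) (x y z : V), br x (a *: y + z) = a *: br x y + br x z,
      forall x : V, br x x = 0
    & forall x y z : V, br x (br y z) + br y (br z x) + br z (br x y) = 0].

Definition brsp (A B : {vspace V}) : {vspace V} :=
  (<< [seq br u v | u <- vbasis A, v <- vbasis B] >>)%VS.

Definition subalgebra (U : {vspace V}) : Prop :=
  forall u v, u \in U -> v \in U -> br u v \in U.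

Definition ideal (I : {vspace V}) : Prop :=
  forall x y, y \in I -> br x y \in I.

(* subalgebra generated by the subspace X: iterate S |-> S + [S,S]
   (dim V many times suffices, as the dimension strictly grows until stable). *)
Definition genalg (X : {vspace V}) : {vspace V} :=
  iter (\dim {: V}) (fun S => (S + brsp S S)%VS) X.

Definition join_alg (U B : {vspace V}) : {vspace V} := genalg (U + B)%VS.

Definition covers (B A : {vspace V}) : Prop :=
  [/\ subalgebra A, subalgebra B, (A <= B)%VS, A != B &
      forall C, subalgebra C -> (A <= C)%VS -> (C <= B)%VS -> C = A \/ C = B].

Definition upper_modular (U : {vspace V}) : Prop :=
  forall B, subalgebra B -> covers B (U :&: B)%VS -> covers (join_alg U B) U.

Definition lower_modular (U : {vspace V}) : Prop :=
  forall B, subalgebra B -> covers (join_alg U B) U -> covers B (U :&: B)%VS.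

Definition semi_modular (U : {vspace V}) : Prop :=
  upper_modular U /\ lower_modular U.

Definition core_free (U : {vspace V}) : Prop :=
  forall I, ideal I -> (I <= U)%VS -> I = 0%VS.

Definition derived (k : nat) : {vspace V} := iter k (fun S => brsp S S) fullv.

Definition solvable : Prop := exists k, derived k = 0%VS.

Definition almost_abelian : Prop :=
  let L2 := brsp fullv fullv in
  exists x : V,
    [/\ (L2 + <[x]>)%VS = fullv, (L2 :&: <[x]>)%VS = 0%VS,
        (forall u v, u \in L2 -> v \in L2 -> br u v = 0)
      & forall u, u \in L2 -> br x u = u].

End Lie.

(* Main.v *)
Require Import Defs.
From HB Require Import structures.
From mathcomp Require Import all_boot all_order all_algebra.
Import GRing.Theory.
Local Open Scope ring_scope.

Section Work.
Variables (F : fieldType) (V : vectType F) (br : V -> V -> V).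
Hypothesis Hbr : is_lie_bracket br.

Lemma brlin a x y z : br (a *: x + y) z = a *: br x z + br y z.
Proof. by case: Hbr. Qed.
Lemma brlinr a x y z : br x (a *: y + z) = a *: br x y + br x z.
Proof. by case: Hbr. Qed.
Lemma bralt x : br x x = 0.
Proof. by case: Hbr. Qed.
Lemma jacobi x y z : br x (br y z) + br y (br z x) + br z (br x y) = 0.
Proof. by case: Hbr. Qed.

Lemma brDl x y z : br (x + y) z = br x z + br y z.
Proof. by have := brlin 1 x y z; rewrite !scale1r. Qed.
Lemma brDr x y z : br x (y + z) = br x y + br x z.
Proof. by have := brlinr 1 x y z; rewrite !scale1r. Qed.
Lemma br0l z : br 0 z = 0.
Proof. by apply: (@addrI _ (br 0 z)); rewrite -brDl !addr0. Qed.
Lemma br0r z : br z 0 = 0.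
Proof. by apply: (@addrI _ (br z 0)); rewrite -brDr !addr0. Qed.
Lemma brZl a x z : br (a *: x) z = a *: br x z.
Proof. by rewrite -[a *: x]addr0 brlin br0l addr0. Qed.
Lemma brZr a x z : br z (a *: x) = a *: br z x.
Proof. by rewrite -[a *: x]addr0 brlinr br0r addr0. Qed.
Lemma brNl x z : br (- x) z = - br z x.
Proof. Abort.
Lemma anti x y : br x y = - br y x.
Proof.
have := bralt (x + y); rewrite brDl !brDr !bralt add0r addr0 => /eqP.
by rewrite addr_eq0 => /eqP.
Qed.
Lemma brNl x z : br (- x) z = - br x z.
Proof. by rewrite -scaleN1r brZl scaleN1r. Qed.
Lemma brNr x z : br z (- x) = - br z x.
Proof. by rewrite -scaleN1r brZr scaleN1r. Qed.
Lemma brBl x y z : br (x - y) z = br x z - br y z.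
Proof. by rewrite brDl brNl. Qed.
Lemma brBr x y z : br x (y - z) = br x y - br x z.
Proof. by rewrite brDr brNr. Qed.

Lemma kerex (f : V -> V)
  (Hf : forall (a : F) x y, f (a *: x + y) = a *: f x + f y) :
  exists K : {vspace V}, forall v, (v \in K) = (f v == 0).
Proof.
pose g : {linear V -> V} := HB.pack f (GRing.isLinear.Build F V V *:%R f Hf).
exists (lker (linfun g)) => v.
by rewrite memv_ker lfunE.
Qed.

Lemma preimex (f : V -> V)
  (Hf : forall (a : F) x y, f (a *: x + y) = a *: f x + f y) (W : {vspace V}) :
  exists K : {vspace V}, forall v, (v \in K) = (f v \in W).
Proof.
pose g : {linear V -> V} := HB.pack f (GRing.isLinear.Build F V V *:%R f Hf).
exists (lfun_preim (linfun g) W) => v.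
by rewrite -memv_preim lfunE.
Qed.

Lemma brsp_mem (A B : {vspace V}) u v : u \in A -> v \in B -> br u v \in brsp br A B.
Proof.
move=> uA vB.
have [P HP] := preimex (fun x => br x v) (fun a x y => brlin a x y v) (brsp br A B).
suff : (A <= P)%VS by move/subvP/(_ u uA); rewrite HP.
have /andP[/eqP <- _] := vbasisP A.
apply/span_subvP => a aA; rewrite HP.
have [Q HQ] := preimex (fun y => br a y) (fun c x y => brlinr c a x y) (brsp br A B).
suff : (B <= Q)%VS by move/subvP/(_ v vB); rewrite HQ.
have /andP[/eqP <- _] := vbasisP B.
apply/span_subvP => b bB; rewrite HQ.
by apply: memv_span; apply/allpairsP; exists (a, b).
Qed.


Lemma brsp_sub (S A : {vspace V}) :
  subalgebra br A -> (S <= A)%VS -> (brsp br S S <= A)%VS.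
Proof.
move=> sA /subvP SA; apply/span_subvP => w /allpairsP[[p q] [/= pS qS ->]].
by apply: sA; apply: SA; apply: vbasis_mem.
Qed.

Definition gstep (S : {vspace V}) := (S + brsp br S S)%VS.

Lemma genalg_ge (X : {vspace V}) : (X <= genalg br X)%VS.
Proof.
rewrite /genalg; elim: (\dim {:V}) => [|n IH] //=.
exact: subv_trans IH (addvSl _ _).
Qed.

Lemma genalg_least (X A : {vspace V}) :
  subalgebra br A -> (X <= A)%VS -> (genalg br X <= A)%VS.
Proof.
move=> sA XA; rewrite /genalg; elim: (\dim {:V}) => [|n IH] //=.
by rewrite subv_add IH /= brsp_sub.
Qed.

Lemma subalg_full : subalgebra br fullv.
Proof. by move=> u v _ _; apply: memvf. Qed.

Lemma genalg_sub (X : {vspace V}) : subalgebra br (genalg br X).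
Proof.
have claim : forall k, (k <= \dim (iter k gstep X))%N \/ gstep (iter k gstep X) = iter k gstep X.
  elim=> [|k [IH|IH]]; [by left | | by right; rewrite iterS IH IH].
  have [E|NE] := eqVneq (gstep (iter k gstep X)) (iter k gstep X).
    by right; rewrite iterS E E.
  left; rewrite iterS.
  have : ~~ ((iter k gstep X) == gstep (iter k gstep X)) by rewrite eq_sym.
  rewrite eqEdim addvSl /= -ltnNge => lt.
  exact: leq_ltn_trans IH lt.
rewrite /genalg -/gstep.
case: (claim (\dim {:V})) => [H|H].
  have -> : iter (\dim {:V}) gstep X = fullv.
    by apply/eqP; rewrite eqEdim subvf.
  exact: subalg_full.
move=> u v uS vS; rewrite -H.
by apply: (subvP (addvSr _ _)); apply: brsp_mem.
Qed.


Lemma join_ge (U X : {vspace V}) : (U + X <= join_alg br U X)%VS.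
Proof. exact: genalg_ge. Qed.
Lemma join_least (U X A : {vspace V}) :
  subalgebra br A -> (U + X <= A)%VS -> (join_alg br U X <= A)%VS.
Proof. exact: genalg_least. Qed.
Lemma join_sub (U X : {vspace V}) : subalgebra br (join_alg br U X).
Proof. exact: genalg_sub. Qed.

Lemma sub_line a : subalgebra br <[a]>%VS.
Proof.
move=> u v /vlineP[k ->] /vlineP[l ->].
by rewrite brZl brZr bralt !scaler0 mem0v.
Qed.

Lemma sub0 : subalgebra br 0%VS.
Proof. by move=> u v; rewrite memv0 => /eqP -> _; rewrite br0l mem0v. Qed.

Lemma cap_sub (A B : {vspace V}) :
  subalgebra br A -> subalgebra br B -> subalgebra br (A :&: B)%VS.
Proof.
move=> sA sB u v /memv_capP[uA uB] /memv_capP[vA vB].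
by apply/memv_capP; split; [apply: sA | apply: sB].
Qed.

Lemma eq0P (X : {vspace V}) : (forall v, v \in X -> v = 0) -> X = 0%VS.
Proof.
move=> H; apply/eqP; rewrite -subv0; apply/subvP => v vX.
by rewrite memv0 (H v vX).
Qed.

Lemma covers_line a : a != 0 -> covers br <[a]>%VS 0%VS.
Proof.
move=> a0; split; [exact: sub0 | exact: sub_line | exact: sub0v | | ].
  by rewrite eq_sym -dimv_eq0 dim_vline a0.
move=> C _ _ CA.
have [->|Cn0] := eqVneq C 0%VS; first by left.
right; apply/eqP; rewrite eqEdim CA dim_vline a0 /=.
by rewrite lt0n dimv_eq0.
Qed.

Lemma cap_line0 (U : {vspace V}) a : a \notin U -> (U :&: <[a]>)%VS = 0%VS.
Proof.
move=> aU; apply: eq0P => v /memv_capP[vU /vlineP[k def]].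
have [k0|kn0] := eqVneq k 0; first by rewrite def k0 scale0r.
move: aU; have -> : a = k^-1 *: v by rewrite def scalerA mulVf // scale1r.
by rewrite memvZ.
Qed.

Lemma um_line (U : {vspace V}) a :
  upper_modular br U -> a \notin U -> covers br (join_alg br U <[a]>) U.
Proof.
move=> um aU; apply: um; first exact: sub_line.
rewrite cap_line0 //; apply: covers_line.
by apply: contraNneq aU => ->; rewrite mem0v.
Qed.

Lemma ideal_brsp (D : {vspace V}) : ideal br D -> ideal br (brsp br D D).
Proof.
move=> iD x y yD.
have [P HP] := preimex (fun y => br x y) (fun c u v => brlinr c x u v) (brsp br D D).
suff : (brsp br D D <= P)%VS by move/subvP/(_ y yD); rewrite HP.
apply/span_subvP => w /allpairsP[[p q] [/= pD qD ->]]; rewrite HP.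
have pD' := vbasis_mem pD; have qD' := vbasis_mem qD.
have := jacobi x p q => /eqP; rewrite -addrA addr_eq0 => /eqP ->.
have h1 : br q x \in D by rewrite anti memvN iD.
rewrite memvN; apply: memvD; apply: brsp_mem => //; exact: iD.
Qed.

Lemma derived_ideal k : ideal br (derived br k).
Proof.
elim: k => [|k IH]; first by move=> x y _; apply: memvf.
by rewrite /derived iterS; apply: ideal_brsp.
Qed.

Lemma abelian_ideal_ex : solvable br -> fullv != 0%VS :> {vspace V} ->
  exists N : {vspace V}, [/\ ideal br N, N != 0%VS &
     forall u v, u \in N -> v \in N -> br u v = 0].
Proof.
move=> [k Hk] f0.
suff [j [Hj1 Hj2]] : exists j, derived br j != 0%VS /\ derived br j.+1 = 0%VS.
  exists (derived br j); split => //; first exact: derived_ideal.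
  move=> u v uN vN; apply/eqP; rewrite -memv0 -Hj2 /derived iterS.
  exact: brsp_mem.
elim: k Hk => [|k IH] Hk; first by case/negP: f0; apply/eqP; exact: Hk.
have [E|NE] := eqVneq (derived br k) 0%VS; first exact: IH.
by exists k.
Qed.


Lemma notsolv : brsp br fullv fullv = fullv -> solvable br -> fullv = 0%VS :> {vspace V}.
Proof.
move=> Hf [k Hk]; rewrite -Hk; elim: k {Hk} => [|k IH] //.
by rewrite /derived iterS -/(derived br k) -IH.
Qed.

Lemma main (U : {vspace V}) :
  solvable br -> subalgebra br U -> U != 0%VS -> core_free br U ->
  semi_modular br U -> \dim U = 1%N /\ almost_abelian br.
Proof.
move=> solv sU Un0 cf [um lm].
have f0 : fullv != 0%VS :> {vspace V}.
  by apply: contraNneq Un0 => f0; rewrite -subv0 -f0 subvf.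
have [N [iN Nn0 abN]] := abelian_ideal_ex solv f0.
pose T := (U + N)%VS.
have UT : forall u, u \in U -> u \in T by move=> u; apply/subvP/addvSl.
have NT : forall n, n \in N -> n \in T by move=> n; apply/subvP/addvSr.
have sT : subalgebra br T.
  move=> y1 y2 /memv_addP[u1 u1U [n1 n1N ->]] /memv_addP[u2 u2U [n2 n2N ->]].
  rewrite brDl !brDr; apply: memvD; apply: memvD.
  - exact/UT/sU.
  - exact/NT/iN.
  - by apply/NT; rewrite anti memvN iN.
  - exact/NT/iN.
pose M c := join_alg br U <[c]>%VS.
have M_sub : forall c, subalgebra br (M c) by move=> c; apply: join_sub.
have UM : forall c, (U <= M c)%VS.
  by move=> c; apply: subv_trans (addvSl _ _) (join_ge _ _).
have cM : forall c, c \in M c.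
  move=> c; apply: (subvP (join_ge U <[c]>)); apply: (subvP (addvSr _ _)).
  exact: memv_line.
have claimA : forall c v, c \notin T -> v \in M c -> v \in N -> v \in U.
  move=> c v cT vM vN.
  have cU : c \notin U by apply: contra cT; apply: UT.
  have [_ _ _ _ mx] := um_line _ _ um cU.
  have UMT : (U <= M c :&: T)%VS by rewrite subv_cap UM addvSl.
  case: (mx (M c :&: T)%VS (cap_sub _ _ (M_sub c) sT) UMT (capvSl _ _)) => E.
    by move: (introT memv_capP (conj vM (NT v vN))); rewrite E.
  have : c \in (M c :&: T)%VS by rewrite E.
  by rewrite memv_cap (negbTE cT) andbF.
have W0 : forall v, v \in U -> v \in N -> v = 0.
  suff E : (U :&: N)%VS = 0%VS.
    by move=> v vU vN; apply/eqP; rewrite -memv0 -E memv_cap vU vN.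
  apply: cf; last exact: capvSl.
  move=> y w /memv_capP[wU wN].
  case: (boolP (y \in T)).
    move=> /memv_addP[u uU [n nN ->]].
    rewrite brDl (abN n w nN wN) addr0 memv_cap sU //=; exact: iN.
  move=> yT; rewrite memv_cap iN // andbT.
  apply: claimA yT _ (iN _ _ wN).
  by apply: M_sub; [apply: cM | apply: (subvP (UM y))].
have eig : forall u a, u \in U -> a \in N -> a != 0 -> br u a \in <[a]>%VS.
  move=> u a uU aN a0.
  have aU : a \notin U by apply: contra a0 => aU; rewrite (W0 a aU aN).
  pose B := (<[a]> + <[br u a]>)%VS.
  have uaN : br u a \in N := iN u a aN.
  have BN : (B <= N)%VS by rewrite subv_add -!memvE aN uaN.
  have sB : subalgebra br B.
    by move=> x y xB yB; rewrite abN ?mem0v //; apply: (subvP BN).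
  have JB : join_alg br U B = M a.
    apply/eqP; rewrite eqEsubv; apply/andP; split.
      apply: join_least (M_sub a) _.
      rewrite subv_add UM /= subv_add -!memvE cM /=.
      by apply: M_sub; [apply: (subvP (UM a)) | apply: cM].
    apply: join_least (join_sub U B) _.
    rewrite subv_add (subv_trans (addvSl U B) (join_ge _ _)) /=.
    apply: subv_trans (join_ge U B); apply: subv_trans (addvSr U B).
    exact: addvSl.
  have cv : covers br B (U :&: B)%VS.
    by apply: lm => //; rewrite JB; apply: um_line.
  have UB0 : (U :&: B)%VS = 0%VS.
    by apply: eq0P => v /memv_capP[vU vB]; apply: W0 => //; apply: (subvP BN).
  rewrite UB0 in cv; case: cv => _ _ _ _ mx.
  case: (mx <[a]>%VS (sub_line a) (sub0v _) (addvSl _ _)) => E.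
    by move/eqP: E; rewrite -dimv_eq0 dim_vline a0.
  by rewrite E; apply: (subvP (addvSr _ _)); apply: memv_line.
have scal : forall u a0 al, u \in U -> a0 \in N -> a0 != 0 ->
    br u a0 = al *: a0 -> forall n, n \in N -> br u n = al *: n.
  move=> u a0 al uU a0N a00 Ha n nN.
  have [->|n0] := eqVneq n 0; first by rewrite br0r scaler0.
  have /vlineP[be Hn] := eig u n uU nN n0.
  case: (boolP (n \in <[a0]>%VS)).
    by move/vlineP=> [t ->]; rewrite brZr Ha !scalerA mulrC.
  move=> na.
  have s0 : n + a0 != 0.
    apply: contra na => /eqP s0; rewrite (_ : n = - a0); first by rewrite memvN memv_line.
    by apply/eqP; rewrite -addr_eq0 s0.
  have /vlineP[g Hg] := eig u (n + a0) uU (memvD nN a0N) s0.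
  rewrite brDr Hn Ha scalerDr in Hg.
  have H2 : (be - g) *: n = (g - al) *: a0.
    by rewrite !scalerBl; apply/eqP; rewrite subr_eq addrAC eq_sym subr_eq Hg addrC.
  have [bg|bg] := eqVneq be g.
    move: H2; rewrite bg subrr scale0r => /esym/eqP; rewrite scaler_eq0 (negbTE a00) orbF.
    by rewrite subr_eq0 Hn bg => /eqP ->.
  case/negP: na; rewrite (_ : n = ((be - g)^-1 * (g - al)) *: a0) ?memvZ ?memv_line //.
  by rewrite -scalerA -H2 scalerA mulVf ?scale1r // subr_eq0.
pose a0 := vpick N.
have a0N : a0 \in N := memv_pick N.
have a00 : a0 != 0 by rewrite vpick0.
have key : forall u al y, u \in U -> br u a0 = al *: a0 -> br u y - al *: y \in U.
  move=> u al y uU Ha.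
  case: (boolP (y \in T)).
    move=> /memv_addP[u' u'U [n nN ->]].
    rewrite brDr (scal u a0 al uU a0N a00 Ha n nN) scalerDr opprD addrACA subrr addr0.
    by rewrite memvB ?memvZ ?sU.
  move=> yT.
  pose c := y + a0.
  have cT : c \notin T.
    apply: contra yT => cT; have -> : y = c - a0 by rewrite /c addrK.
    by rewrite memvB // NT.
  have yU : y \notin U by apply: contra yT; apply: UT.
  have [_ _ _ _ mx] := um_line _ _ um yU.
  have UMM : (U <= M y :&: M c)%VS by rewrite subv_cap !UM.
  have eqc : br u y - al *: y = br u c - al *: c.
    by rewrite /c brDr Ha scalerDr opprD addrACA subrr addr0.
  have inM : br u y - al *: y \in (M y :&: M c)%VS.
    rewrite memv_cap; apply/andP; split.
      by rewrite memvB ?memvZ ?cM //; apply: M_sub; [apply: (subvP (UM y)) | apply: cM].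
    by rewrite eqc memvB ?memvZ ?cM //; apply: M_sub; [apply: (subvP (UM c)) | apply: cM].
  case: (mx (M y :&: M c)%VS (cap_sub _ _ (M_sub y) (M_sub c)) UMM (capvSl _ _)) => E.
    by move: inM; rewrite E.
  have : y \in (M y :&: M c)%VS by rewrite E.
  rewrite memv_cap => /andP[_ yMc].
  have a0U : a0 \in U.
    apply: claimA cT _ a0N.
    have -> : a0 = c - y by rewrite /c (addrC y a0) addrK.
    by rewrite memvB // cM.
  by move: a00; rewrite (W0 a0 a0U a0N) eqxx.
have Zc : forall z, z \in U -> br z a0 = 0 -> z = 0.
  have [K HK] := kerex (fun v => br v a0) (fun c x y => brlin c x y a0).
  suff E : (U :&: K)%VS = 0%VS.
    move=> z zU za; apply/eqP; rewrite -memv0 -E memv_cap zU HK za eqxx.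
    by [].
  apply: cf; last exact: capvSl.
  move=> x z /memv_capP[zU]; rewrite HK => /eqP za.
  have za' : br z a0 = 0 *: a0 by rewrite scale0r.
  have zN := scal z a0 0 zU a0N a00 za'.
  apply/memv_capP; split.
    have := key z 0 x zU za'; rewrite scale0r subr0 => h.
    by rewrite anti memvN.
  rewrite HK.
  have ax : br a0 x \in N by rewrite anti memvN iN.
  have := jacobi x z a0; rewrite za br0r add0r (zN _ ax) scale0r add0r => H.
  by rewrite anti H oppr0.
pose u0 := vpick U.
have u0U : u0 \in U := memv_pick U.
have u00 : u0 != 0 by rewrite vpick0.
have [al0 Hal0] : exists al, br u0 a0 = al *: a0.
  by apply/vlineP; apply: eig.
have al00 : al0 != 0.
  by apply: contra u00 => /eqP e0; apply/eqP; apply: Zc => //; rewrite Hal0 e0 scale0r.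
have UL : U = <[u0]>%VS.
  apply/eqP; rewrite eqEsubv -memvE u0U andbT; apply/subvP => u uU.
  have [al Hal] : exists al, br u a0 = al *: a0 by apply/vlineP; apply: eig.
  have z0 : u - (al / al0) *: u0 = 0.
    apply: Zc; first by rewrite memvB ?memvZ.
    by rewrite brBl brZl Hal Hal0 scalerA divfK // subrr.
  by move/eqP: z0; rewrite subr_eq0 => /eqP ->; rewrite memvZ ?memv_line.
split; first by rewrite UL dim_vline u00.
pose x := al0^-1 *: u0.
have xU : x \in U by rewrite memvZ.
have Hx : br x a0 = 1 *: a0 by rewrite brZl Hal0 scalerA mulVf.
have Ux : forall v, v \in U -> v \in <[x]>%VS.
  move=> v; rewrite UL => /vlineP[k ->]; apply/vlineP; exists (k * al0).
  by rewrite /x scalerA -mulrA mulfV // mulr1.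
clearbody x.
have keyx : forall y, br x y - y \in <[x]>%VS.
  by move=> y; apply: Ux; have := key x 1 y xU Hx; rewrite scale1r.
have linE : forall a v w, br x (a *: v + w) - (a *: v + w) = a *: (br x v - v) + (br x w - w).
  by move=> a v w; rewrite brlinr scalerBr opprD addrACA.
have [E HE] := kerex (fun v => br x v - v) linE.
have HE' : forall e, e \in E -> br x e = e.
  by move=> e; rewrite HE subr_eq0 => /eqP.
have EL : forall y, exists2 e, e \in E & exists t, y = e + t *: x.
  move=> y; have /vlineP[t Ht] := keyx y.
  exists (y + t *: x); last by exists (- t); rewrite scaleNr addrK.
  by rewrite HE brDr brZr bralt scaler0 addr0 opprD addrA Ht subrr.
have brEx : forall e, e \in E -> br e x = - e.
  by move=> e eE; rewrite anti HE'.
have Eabel : forall e e', e \in E -> e' \in E -> br e e' = 0.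
  move=> e e' eE e'E.
  have := jacobi x e e'; rewrite (brEx e' e'E) (HE' e eE) brNr (anti e' e).
  rewrite -!addrA => /eqP; rewrite addr_eq0 opprD !opprK => /eqP Hw.
  have : br e e' \in <[x]>%VS.
    by have := keyx (br e e'); rewrite Hw addrK.
  case/vlineP=> t Ht.
  have [t0|tn0] := eqVneq t 0; first by rewrite Ht t0 scale0r.
  exfalso; move: f0; rewrite notsolv ?eqxx //.
  apply/eqP; rewrite eqEsubv subvf /=; apply/subvP => v _.
  have [e1 e1E [s ->]] := EL v.
  apply: memvD; first by rewrite -(HE' e1 e1E); apply: brsp_mem; apply: memvf.
  apply: memvZ; have -> : x = t^-1 *: br e e' by rewrite Ht scalerA mulVf ?scale1r.
  by apply: memvZ; apply: brsp_mem; apply: memvf.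
have L2E : brsp br fullv fullv = E.
  apply/eqP; rewrite eqEsubv; apply/andP; split.
    apply/span_subvP => w /allpairsP[[p q] [_ _ ->]] /=.
    have [e eE [s ->]] := EL p; have [e' e'E [t ->]] := EL q.
    rewrite brDl !brDr !brZl !brZr bralt !scaler0 addr0 (Eabel e e' eE e'E) add0r.
    rewrite (brEx e eE) (HE' e' e'E).
    by apply: memvD; apply: memvZ => //; rewrite memvN.
  apply/subvP => e eE; rewrite -(HE' e eE); apply: brsp_mem; apply: memvf.
exists x; rewrite L2E; split.
- apply/eqP; rewrite eqEsubv subvf /=; apply/subvP => v _.
  have [e eE [s ->]] := EL v.
  by apply: memv_add => //; rewrite memvZ ?memv_line.
- apply: eq0P => v /memv_capP[vE /vlineP[t Ht]].
  move: vE; rewrite HE Ht brZr bralt scaler0 sub0r oppr_eq0 => /eqP.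
  by [].
- exact: Eabel.
- exact: HE'.
Qed.

End Work.

Theorem corollary2p4 (F : fieldType) (V : vectType F) (br : V -> V -> V)
    (Hbr : is_lie_bracket br) (U : {vspace V}) :
  solvable br -> subalgebra br U -> U != 0%VS -> core_free br U ->
  semi_modular br U ->
  \dim U = 1%N /\ almost_abelian br.
Proof. exact: main. Qed.
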